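(* Let $\Bbbk$ be an algebraically closed field of characteristic zero, $G$ a finite abelian group, $u\in G$ of order $2$, and $V$ a finite-dimensional $\Bbbk G$-module with $u\cdot v=-v$ for all $v\in V$. Let $(T,\beta,\alpha,\psi)$ and $(T',\beta',\alpha',\psi')$ be compatible data. Then: (1) $(T\circ T',\beta\circ T'+\beta',\alpha\circ\alpha',\psi\psi')$ is a compatible datum; (2) the set of compatible data with the product $$(T,\beta,\alpha,\psi)\bullet(T',\beta',\alpha',\psi')=(T\circ T',\beta\circ T'+\beta',\alpha\circ\alpha',\psi\psi')$$ is a group with identity $(\mathrm{Id}_V,0,\mathrm{id}_G,1)$.
   Context: A compatible datum $(T,\beta,\alpha,\psi)$ consists of: a group automorphism $\alpha:G\to G$ with $\alpha(u)=u$; a linear automorphism $T:V\to V$ with $T(g\cdot v)=\alpha(g)\cdot T(v)$ for all $v\in V$, $g\in G$; a symmetric $G$-invariant bilinear form $\beta:V\times V\to\Bbbk$; and $\psi\in H^2(G,\Bbbk^\times)$. Here $(\beta\circ T')(v,w)=\beta(T'(v),T'(w))$ and $\psi\psi'$ is the product in $H^2(G,\Bbbk^\times)$. *)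

(* Defs.v *)
From HB Require Import structures.
From mathcomp Require Import all_boot all_order all_algebra all_fingroup.
From mathcomp Require Import mxrepresentation.
Set Implicit Arguments. Unset Strict Implicit. Unset Printing Implicit Defensive.
Import GRing.Theory.
Local Open Scope group_scope.

(* Conventions:
   - V = 'rV[k]_n (row vectors), G acts via a matrix representation rG,
     g . v := v *m rG g.
   - A linear map T : V -> V is a matrix, T(v) := v *m T, so (T o T')(v) =
     v *m T' *m T, i.e. the matrix of T o T' is T' *m T.
   - A bilinear form beta on V is a matrix B, beta(v,w) := (v *m B *m w^T) 0 0.
     Then (beta o T')(v,w) = beta(T' v, T' w) has matrix T' *m B *m T'^T.
   - Automorphisms of G are elements of Aut G (permutations of gT that restrict
     to automorphisms of G and are the identity outside G); composition
     alpha o alpha' is the permutation product alpha' * alpha.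
   - H^2(G, k^x) (trivial action): 2-cochains are functions gT -> gT -> k
     (supported in G: equal to 1 outside G x G); an element of H^2 is a
     cohomology class, represented as the set (predicate) of all normalized
     cocycles in it. *)

Section Defs.
Variables (k : fieldType) (gT : finGroupType) (G : {group gT}).

Definition bform n (B : 'M[k]_n) (v w : 'rV[k]_n) : k := (v *m B *m w^T)%R ord0 ord0.

Definition cochain2 := gT -> gT -> k.

Definition is_cocycle2 (c : cochain2) : Prop :=
  [/\ (forall x y, x \in G -> y \in G -> c x y != 0%R),
      (forall x y, (x \notin G) || (y \notin G) -> c x y = 1%R) &
      (forall x y z, x \in G -> y \in G -> z \in G ->
          c x y * c (x * y)%g z = c y z * c x (y * z)%g)%R].

Definition cohomologous (c c' : cochain2) : Prop :=
  exists f : gT -> k, (forall x, x \in G -> f x != 0%R) /\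
    (forall x y, x \in G -> y \in G ->
        c' x y = (c x y * (f x * f y / f (x * y)%g)))%R.

Definition coh_class (c : cochain2) : cochain2 -> Prop :=
  fun c' => is_cocycle2 c' /\ cohomologous c c'.

Definition is_H2 (P : cochain2 -> Prop) : Prop :=
  exists c, is_cocycle2 c /\ P = coh_class c.

Definition H2mul (P Q : cochain2 -> Prop) : cochain2 -> Prop :=
  fun c => exists a b, P a /\ Q b /\ c = (fun x y => a x y * b x y)%R.

Definition H2one : cochain2 -> Prop := coh_class (fun _ _ => 1%R).

End Defs.

Record datum (k : fieldType) (gT : finGroupType) (n : nat) := Datum {
  dT : 'M[k]_n;
  dB : 'M[k]_n;
  dalpha : {perm gT};
  dpsi : cochain2 k gT -> Prop }.

Section Compat.
Variables (k : fieldType) (gT : finGroupType) (G : {group gT}) (u : gT)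
  (n : nat) (rG : mx_representation k G n).

Definition compatible (d : datum k gT n) : Prop :=
  let T := dT d in let B := dB d in let al := dalpha d in
  [/\ al \in Aut G /\ al u = u,
      T \in unitmx /\
        (forall g (v : 'rV[k]_n), g \in G -> (v *m rG g) *m T = (v *m T) *m rG (al g))%R,
      (forall v w, bform B v w = bform B w v) /\
        (forall g v w, g \in G -> bform B (v *m rG g) (w *m rG g) = bform B v w) &
      is_H2 G (dpsi d)].

Definition dmul (d d' : datum k gT n) : datum k gT n :=
  Datum (dT d' *m dT d)%R (dT d' *m dB d *m (dT d')^T + dB d')%R
        (dalpha d' * dalpha d)%g (H2mul (dpsi d) (dpsi d')).

Definition dunit : datum k gT n := Datum 1%:M%R 0%R 1%g (H2one G).

End Compat.

Definition is_group_set (D : Type) (S : D -> Prop) (op : D -> D -> D) (e : D) : Prop :=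
  [/\ S e,
      (forall x y, S x -> S y -> S (op x y)),
      (forall x y z, S x -> S y -> S z -> op x (op y z) = op (op x y) z),
      (forall x, S x -> op e x = x /\ op x e = x) &
      (forall x, S x -> exists y, S y /\ op x y = e /\ op y x = e)].

(* Main.v *)
Require Import Defs.
From HB Require Import structures.
From mathcomp Require Import all_boot all_order all_algebra all_fingroup.
From mathcomp Require Import mxrepresentation.
From mathcomp.algebra_tactics Require Import ring.
From Stdlib Require Import FunctionalExtensionality PropExtensionality.
Import GRing.Theory.

Section Coc.
Variables (k : fieldType) (gT : finGroupType) (G : {group gT}).
Local Open Scope ring_scope.

Lemma coc_nz {c : cochain2 k gT} : is_cocycle2 G c -> forall x y, c x y != 0.
Proof.
case=> Hn Ho _ x y.
case: (boolP (x \in G)) => hx; case: (boolP (y \in G)) => hy; first exact: Hn.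
all: by rewrite Ho ?hx ?hy ?orbT // oner_neq0.
Qed.

Lemma coc_mul (a b : cochain2 k gT) : is_cocycle2 G a -> is_cocycle2 G b ->
  is_cocycle2 G (fun x y => a x y * b x y).
Proof.
move=> Ha Hb; have na := coc_nz Ha; have nb := coc_nz Hb.
case: Ha => _ Hao Hai; case: Hb => _ Hbo Hbi; split.
- by move=> x y _ _; rewrite mulf_neq0.
- by move=> x y h; rewrite Hao // Hbo // mulr1.
- move=> x y z hx hy hz; have e1 := Hai x y z hx hy hz; have e2 := Hbi x y z hx hy hz.
  transitivity ((a x y * a (x * y)%g z) * (b x y * b (x * y)%g z)); first ring.
  rewrite e1 e2; ring.
Qed.

Lemma coc_inv {a : cochain2 k gT} : is_cocycle2 G a ->
  is_cocycle2 G (fun x y => (a x y)^-1).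
Proof.
move=> Ha; have na := coc_nz Ha.
case: Ha => _ Hao Hai; split.
- by move=> x y _ _; rewrite invr_neq0.
- by move=> x y h; rewrite Hao // invr1.
- move=> x y z hx hy hz; have e1 := Hai x y z hx hy hz.
  by rewrite -!invfM e1.
Qed.

Lemma coh_mul (c c' : cochain2 k gT) : is_cocycle2 G c -> is_cocycle2 G c' ->
  H2mul (coh_class G c) (coh_class G c') = coh_class G (fun x y => c x y * c' x y).
Proof.
move=> Hc Hc'; apply: functional_extensionality => z; apply: propositional_extensionality.
split.
- case=> a [b [[Ha [fa [fan Hfa]]] [[Hb [fb [fbn Hfb]]] ->]]].
  split; first exact: coc_mul.
  exists (fun x => fa x * fb x); split; first by move=> x hx; rewrite mulf_neq0 ?fan ?fbn.
  move=> x y hx hy; rewrite Hfa // Hfb //.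
  have := fan x hx; have := fan y hy; have := fan _ (groupM hx hy).
  have := fbn x hx; have := fbn y hy; have := fbn _ (groupM hx hy).
  move=> *; field; apply/andP; split => //.
- case=> Hz [f [fn Hf]].
  have nc' := coc_nz Hc'.
  exists (fun x y => z x y * (c' x y)^-1), c'; split; last split.
  + split; first by apply: coc_mul => //; exact: coc_inv.
    exists f; split => // x y hx hy; rewrite Hf //.
    have := nc' x y; have := fn _ (groupM hx hy); move=> *; field; apply/andP; split => //.
  + split => //; exists (fun _ => 1); split => [x _|x y _ _]; first exact: oner_neq0.
    by rewrite mulr1 divr1 mulr1.
  + apply: functional_extensionality => x; apply: functional_extensionality => y.
    by rewrite mulrVK // unitfE nc'.
Qed.

Lemma H2mulA (P Q R : cochain2 k gT -> Prop) :
  H2mul P (H2mul Q R) = H2mul (H2mul P Q) R.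
Proof.
apply: functional_extensionality => z; apply: propositional_extensionality.
split.
- case=> a [bc [Pa [[b [c [Qb [Rc ->]]]] ->]]].
  exists (fun x y => a x y * b x y), c; split; first by exists a, b.
  split => //; apply: functional_extensionality => x; apply: functional_extensionality => y.
  by rewrite mulrA.
- case=> ab [c [[a [b [Pa [Qb ->]]]] [Rc ->]]].
  exists a, (fun x y => b x y * c x y); split => //; split; first by exists b, c.
  apply: functional_extensionality => x; apply: functional_extensionality => y.
  by rewrite mulrA.
Qed.

Lemma coc1 : is_cocycle2 G (fun _ _ => 1 : k).
Proof. split; [move=> *; exact: oner_neq0 | by [] | by move=> *; rewrite mulr1]. Qed.

Lemma fun1 (c : cochain2 k gT) : (fun x y => 1 * c x y) = c.
Proof. by apply: functional_extensionality => x; apply: functional_extensionality => y; rewrite mul1r. Qed.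
Lemma fun1r (c : cochain2 k gT) : (fun x y => c x y * 1) = c.
Proof. by apply: functional_extensionality => x; apply: functional_extensionality => y; rewrite mulr1. Qed.

End Coc.
Arguments coc_inv {k gT G a}.
Arguments coc_nz {k gT G c}.

Section Bf.
Variables (k : fieldType) (n : nat).
Local Open Scope ring_scope.

Lemma bform_mul (T B : 'M[k]_n) v w :
  bform (T *m B *m T^T) v w = bform B (v *m T) (w *m T).
Proof. by rewrite /bform trmx_mul !mulmxA. Qed.

Lemma bform_add (B B' : 'M[k]_n) v w :
  bform (B + B') v w = bform B v w + bform B' v w.
Proof. by rewrite /bform mulmxDr mulmxDl mxE. Qed.

Lemma bform_opp (B : 'M[k]_n) v w : bform (- B) v w = - bform B v w.
Proof. by rewrite /bform mulmxN mulNmx mxE. Qed.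

Lemma bform0 v w : bform (0 : 'M[k]_n) v w = 0.
Proof. by rewrite /bform mulmx0 mul0mx mxE. Qed.
End Bf.

Theorem lemma4p8 (k : closedFieldType) (hk : [pchar k]%R =i pred0)
  (gT : finGroupType) (G : {group gT}) (hab : abelian G)
  (u : gT) (huG : u \in G) (hu2 : #[u]%g = 2)
  (n : nat) (rG : mx_representation k G n)
  (hV : forall v : 'rV[k]_n, (v *m rG u = - v)%R) :
  (forall d d' : datum k gT n,
     compatible u rG d -> compatible u rG d' ->
     compatible u rG (dmul d d')) /\
  is_group_set (compatible u rG) (@dmul k gT n) (dunit k G n).
Proof.
have Hmul : forall d d' : datum k gT n,
     compatible u rG d -> compatible u rG d' -> compatible u rG (dmul d d').
  case=> T B al ps [T' B' al' ps'].
  case=> /= [[alA alu] [Tu TH] [Bs Bi] [c [Hc ->]]].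
  case=> /= [[alA' alu'] [Tu' TH'] [Bs' Bi'] [c' [Hc' ->]]].
  split => /=.
  - by rewrite groupM // permM alu' alu.
  - split; first by rewrite unitmx_mul Tu Tu'.
    move=> g v hg; rewrite !mulmxA TH' // TH ?permM //; exact: Aut_closed.
  - split.
      by move=> v w; rewrite !bform_add !bform_mul Bs Bs'.
    move=> g v w hg; rewrite !bform_add !bform_mul Bi' // !TH' // Bi //; exact: Aut_closed.
  - rewrite coh_mul //; eexists; split; last reflexivity; exact: coc_mul.
split => //; split.
- split => /=.
  + by rewrite group1 perm1.
  + by split; [exact: unitmx1 | move=> g v _; rewrite !mulmx1 perm1].
  + by split => *; rewrite !bform0.
  + by exists (fun _ _ => 1%R); split => //; exact: coc1.
- exact: Hmul.
- case=> [T1 B1 a1 p1] [T2 B2 a2 p2] [T3 B3 a3 p3] _ _ _; rewrite /dmul /=.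
  congr Datum; last exact: H2mulA.
  + by rewrite mulmxA.
  + rewrite !trmx_mul ?mulmxDr !mulmxA ?addrA.
    rewrite (mulmxDl (T3 *m T2 *m B1 *m T2^T)%R (T3 *m B2)%R) ?mulmxA.
    reflexivity.
  + symmetry. apply: mulgA.
- case=> [T B al ps] [_ _ _ [c [Hc /= ->]]]; rewrite /dmul /=; split.
  + by rewrite mulmx1 mulmx0 mul0mx add0r mulg1 /H2one coh_mul ?fun1 //; exact: coc1.
  + by rewrite !mul1mx trmx1 mulmx1 addr0 mul1g /H2one coh_mul ?fun1r //; exact: coc1.
- case=> [T B al ps] [/= [alA alu] [Tu TH] [Bs Bi] [c [Hc /= ->]]].
  have Hci := coc_inv Hc; have nc := coc_nz Hc.
  have act : forall (g : gT) (v : 'rV[k]_n), g \in G ->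
      (v *m rG g *m invmx T = v *m invmx T *m rG ((al^-1)%g g))%R.
    move=> g v hg; have hh : (al^-1)%g g \in G by apply: Aut_closed; rewrite ?groupV.
    have e := TH _ (v *m invmx T)%R hh; rewrite (mulmxKV Tu) permKV in e.
    by rewrite -e mulmxK.
  exists (Datum (invmx T) (- (invmx T *m B *m (invmx T)^T))%R (al^-1)%g
     (coh_class G (fun x y => (c x y)^-1)%R)); split; [|split].
  + split => /=.
    * by rewrite groupV -{1}alu permK.
    * by split; [rewrite unitmx_inv | exact: act].
    * split; first by move=> v w; rewrite !bform_opp !bform_mul Bs.
      move=> g v w hg; rewrite !bform_opp !bform_mul !act // Bi //.
      by apply: Aut_closed; rewrite ?groupV.
    * by eexists; split; last reflexivity.
  + rewrite /dmul /dunit /=; congr Datum.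
    * exact: mulVmx.
    * exact: addrN.
    * by rewrite mulVg.
    * rewrite coh_mul //; congr coh_class.
      apply: functional_extensionality => x; apply: functional_extensionality => y.
      by rewrite mulfV.
  + rewrite /dmul /dunit /=; congr Datum.
    * exact: mulmxV.
    * rewrite mulmxN mulNmx !mulmxA (mulmxV Tu) mul1mx -mulmxA -trmx_mul.
      by rewrite (mulmxV Tu) trmx1 mulmx1 addNr.
    * by rewrite mulgV.
    * rewrite coh_mul //; congr coh_class.
      apply: functional_extensionality => x; apply: functional_extensionality => y.
      by rewrite mulVf.
Qed.
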